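(* Run the mechanism BFM-SWM described in the context with arbitrary $B>0$, $\alpha>1$, $\beta>1$, $\epsilon>0$, $\ell\in\{1,2\}$, with all sellers behaving truthfully. Then $$\sum_{i=1}^{\ell}\sum_{t=1}^{M}v(S_{i,t})\ \le\ \frac{2\ell\cdot\alpha\big(v(S^* )-p(S^* )\big)}{(\alpha-1)(1-1/\beta)}.$$
   Context: Setting. $\mathcal{N}$ is a finite set of $n$ sellers. The valuation $v:2^{\mathcal{N}}\to\mathbb{R}_{\ge 0}$ satisfies $v(\emptyset)=0$ and is submodular (for $X\subseteq Y\subseteq\mathcal{N}$ and $u\notin Y$, $v(u\mid Y)\le v(u\mid X)$), not necessarily monotone, where $v(S\mid T)=v(S\cup T)-v(T)$, $v(u\mid T)=v(\{u\}\mid T)$. Each seller $u$ has a private cost $c(u)\ge 0$; $c(X)=\sum_{u\in X}c(u)$, $p(X)=\sum_{u\in X}p(u)$. $B>0$ is the budget, $[\ell]=\{1,\dots,\ell\}$. Sellers behave truthfully: a seller $u$ offered price $q$ accepts iff $c(u)\le q$. Mechanism BFM-SWM (inputs $B$, $\alpha>1$, $\beta>1$, $\epsilon>0$, $\ell\in\{1,2\}$): 1. Offer every seller the price $B$; let $R$ be the set of sellers who accept, and set $p(u)=B$ for $u\in R$. 2. Set $t=0$, $\rho_0=\epsilon/\alpha$, $u^*=\emptyset$ ($u^*$ is a set of at most one seller), and $S_{i,0}=\emptyset$ for $i\in[\ell]$. 3. Repeat rounds: set $t\leftarrow t+1$, $\rho_t=\alpha\rho_{t-1}$, $S_{i,t}=\emptyset$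 for all $i\in[\ell]$. Process the sellers $u\in R\setminus(\bigcup_{i=1}^{\ell}S_{i,t-1}\cup u^* )$ one at a time in a fixed order. For each such $u$: pick $j\in\arg\max_{i\in[\ell]}v(u\mid S_{i,t})$ (current contents); update $p(u)\leftarrow\min\{p(u),\ v(u\mid S_{j,t})/(\beta+\rho_t/B)\}$ and offer $p(u)$ to $u$. If $u$ accepts: if $v(S_{j,t}\cup\{u\})-p(S_{j,t}\cup\{u\})>\rho_t$ (current prices), set $u^*\leftarrow\{u\}$ and end the round immediately; otherwise add $u$ to $S_{j,t}$. If $u$ rejects, remove $u$ from $R$. After the round, stop if $R\setminus\left(\bigcup_{i=1}^{\ell}(S_{i,t-1}\cup S_{i,t})\cup u^*\right)=\emptyset$; otherwise start another round. 4. Let $M$ be the final value of $t$. Output $S^*\in\arg\max_{A\in\{S_{i,t}: i\in[\ell],\ t\in\{M-1,M\}\}\cup\{u^*\}}\big(v(A)-p(A)\big)$, paying each $u\in S^*$ its current price $p(u)$; $p(S^* )$ is the total payment. Notation: $S_{i,t}$ denotes the contents of that candidate set at the end of round $t$. *)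

(* Defs.v *)
From mathcomp Require Import all_boot all_order all_algebra.
Set Implicit Arguments. Unset Strict Implicit. Unset Printing Implicit Defensive.
Import Order.TTheory GRing.Theory Num.Theory.
Local Open Scope ring_scope.

Section BFM.
Variables (R : realFieldType) (N : finType) (ell : nat).

Definition marg (v : {set N} -> R) (u : N) (S : {set N}) : R := v (u |: S) - v S.

Definition submodular (v : {set N} -> R) : Prop :=
  forall (X Y : {set N}) (u : N), X \subset Y -> u \notin Y ->
    marg v u Y <= marg v u X.

Definition psum (p : N -> R) (A : {set N}) : R := \sum_(x in A) p x.

Definition rho (alpha eps : R) (t : nat) : R := eps / alpha * alpha ^+ t.

(* global state between rounds: R, prices, u*, candidate sets S_{i,t} of the
   last completed round *)
Record mstate := MState
  { mR : {set N}; mp : N -> R; mu : {set N}; mS : 'I_ell -> {set N} }.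

(* state inside a round; rstop = the round has been ended early *)
Record rstate := RState
  { rR : {set N}; rp : N -> R; ru : {set N}; rS : 'I_ell -> {set N}; rstop : bool }.

Variables (v : {set N} -> R) (c : N -> R) (B alpha beta eps : R) (ord : seq N).
(* tie-breaking: tb t u S is the index j in argmax_i v(u | S i) chosen when
   seller u is processed in round t with current candidate sets S *)
Variable tb : nat -> N -> ('I_ell -> {set N}) -> 'I_ell.

Definition step (t : nat) (s : rstate) (u : N) : rstate :=
  if rstop s then s else
  let j := tb t u (rS s) in
  let q := Num.min (rp s u) (marg v u (rS s j) / (beta + rho alpha eps t / B)) in
  let p' := fun x => if x == u then q else rp s x in
  if c u <= q then
    if rho alpha eps t < v (u |: rS s j) - psum p' (u |: rS s j)
    then RState (rR s) p' [set u] (rS s) true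
    else RState (rR s) p' (ru s) (fun i => if i == j then u |: rS s i else rS s i) false
  else
    RState (rR s :\ u) p' (ru s) (rS s) false.

Definition round (t : nat) (s : mstate) : mstate :=
  let L := [seq u <- ord | u \in mR s :\: ((\bigcup_(i < ell) mS s i) :|: mu s)] in
  let r := foldl (step t) (RState (mR s) (mp s) (mu s) (fun _ => set0) false) L in
  MState (rR r) (rp r) (ru r) (rS r).

(* steps 1-2: offer B to everybody; R = acceptors; prices B; u* = S_{i,0} = empty *)
Definition init : mstate :=
  MState [set u | c u <= B] (fun _ => B) set0 (fun _ => set0).

Fixpoint run (t : nat) : mstate :=
  if t is t'.+1 then round t (run t') else init.

Definition Sets (t : nat) (i : 'I_ell) : {set N} := mS (run t) i.

Definition stops (t : nat) : bool :=
  mR (run t) :\: ((\bigcup_(i < ell) (Sets t.-1 i :|: Sets t i)) :|: mu (run t)) == set0.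

Definition candidate (M : nat) (A : {set N}) : Prop :=
  (exists i : 'I_ell, A = Sets M.-1 i \/ A = Sets M i) \/ A = mu (run M).

Definition util (M : nat) (A : {set N}) : R := v A - psum (mp (run M)) A.

End BFM.

(* Main.v *)
Require Import Defs.
From mathcomp Require Import all_boot all_order all_algebra.
From mathcomp Require Import ring lra.
Import Order.TTheory GRing.Theory Num.Theory.
Local Open Scope ring_scope.
Set Implicit Arguments. Unset Strict Implicit.

Section Pf.
Variables (R : realFieldType) (N : finType) (ell : nat).
Variables (v : {set N} -> R) (c : N -> R) (B alpha beta eps : R) (ord : seq N).
Variable tb : nat -> N -> ('I_ell -> {set N}) -> 'I_ell.
Hypotheses (v0 : v set0 = 0) (vge0 : forall A, 0 <= v A) (subm : submodular v)
  (cge0 : forall u, 0 <= c u) (Bgt0 : 0 < B) (agt1 : 1 < alpha) (bgt1 : 1 < beta)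
  (egt0 : 0 < eps) (hord : perm_eq ord (enum N)).

Local Notation stp := (step v c B alpha beta eps tb).
Local Notation rn := (run v c B alpha beta eps ord tb).
Local Notation rh t := (rho alpha eps t).

Lemma rho_gt0 t : 0 < rh t.
Proof.
rewrite /rho; apply: mulr_gt0; first (apply: divr_gt0 => //; move: agt1; lra).
by apply: exprn_gt0; move: agt1; lra.
Qed.

Lemma rhoS t : rh t.+1 = alpha * rh t.
Proof. by rewrite /rho exprS; ring. Qed.

Lemma psum_eq (p p' : N -> R) (S : {set N}) :
  (forall x, x \in S -> p' x = p x) -> psum p' S = psum p S.
Proof. by move=> h; apply: eq_bigr. Qed.

Lemma psum_le (p p' : N -> R) (S : {set N}) :
  (forall x, p' x <= p x) -> psum p' S <= psum p S.
Proof. by move=> h; apply: ler_sum. Qed.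

Lemma psum_add (p : N -> R) u (S : {set N}) : u \notin S ->
  psum p (u |: S) = p u + psum p S.
Proof. by move=> h; rewrite /psum big_setU1. Qed.

Record Inv t (p0 : N -> R) (u0 R0 E : {set N}) (s : rstate R N ell) (rest : seq N) : Prop :=
 InvI {
  ia : forall i x, x \in rest -> x \notin rS s i;
  ib : forall i, v (rS s i) - psum (rp s) (rS s i) <= rh t;
  ic : forall i, beta * psum (rp s) (rS s i) <= v (rS s i);
  id : forall x, rp s x <= p0 x;
  ie : rstop s -> exists u j, [/\ ru s = [set u], u \notin rS s j &
             rh t < v (u |: rS s j) - psum (rp s) (u |: rS s j)];
  iff : ~~ rstop s -> ru s = u0 /\ (forall x, x \in rR s ->
             [|| x \in rest, [exists i, x \in rS s i] | x \in E]);
  ig : rR s \subset R0 }.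

Lemma Inv_step t p0 u0 R0 E s u rest : uniq (u :: rest) ->
  Inv t p0 u0 R0 E s (u :: rest) -> Inv t p0 u0 R0 E (stp t s u) rest.
Proof.
move=> /andP [unr urest] [ha hb hc hd he hf hg].
rewrite /step.
case hst: (rstop s).
  split=> //; first by move=> i x xr; apply: ha; rewrite inE xr orbT.
  by rewrite hst.
have uS : forall i, u \notin rS s i by move=> i; apply: ha; rewrite inE eqxx.
set j := tb t u (rS s).
set q := Num.min _ _.
set p' := fun x => if x == u then q else rp s x.
have pe : forall S : {set N}, u \notin S -> psum p' S = psum (rp s) S.
  move=> S uS'; apply: psum_eq => x xS; rewrite /p'.
  by case: eqP => // exu; rewrite -exu xS in uS'.
have hp' : forall x, p' x <= p0 x.
  move=> x; rewrite /p'; case: eqP => // ->.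
  by apply: le_trans (hd u); rewrite /q ge_min lexx.
have dgt0 : 0 < beta + rh t / B.
  have := rho_gt0 t => h; have : 0 < rh t / B by apply: divr_gt0.
  move: bgt1; lra.
case: ifP => hacc.
  have q0 : 0 <= q by apply: le_trans hacc.
  have qm : beta * q <= marg v u (rS s j).
    have : q <= marg v u (rS s j) / (beta + rh t / B) by rewrite /q ge_min lexx orbT.
    rewrite ler_pdivlMr // => h.
    have : q * beta <= q * (beta + rh t / B).
      apply: ler_wpM2l => //; have : 0 < rh t / B by apply: divr_gt0 => //; apply: rho_gt0.
      lra.
    move: bgt1; nra.
  case: ifP => htest.
    split=> //=.
    - by move=> i x xr; apply: ha; rewrite inE xr orbT.
    - by move=> i; rewrite pe.
    - by move=> i; rewrite pe.
    - by move=> _; exists u, j; split=> //; apply: uS.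
  split=> //=.
  - move=> i x xr; case: eqP => _; last by apply: ha; rewrite inE xr orbT.
    rewrite !inE negb_or (ha i x) ?inE ?xr ?orbT // andbT.
    by apply/eqP => exu; rewrite exu (negbTE unr) in xr.
  - move=> i; case: eqP => [->|_]; last by rewrite pe.
    by rewrite leNgt htest.
  - move=> i; case: eqP => [->|_]; last by rewrite pe.
    rewrite psum_add // pe // /p' eqxx.
    have := hc j; rewrite /marg in qm; lra.
  - move=> _; have [hu hx] := hf (negbT hst); split=> // x xR.
    move: (hx x xR).
    rewrite inE; case/orP; first case/orP.
    + move=> /eqP ->; apply/orP; right; apply/orP; left.
      by apply/existsP; exists j; rewrite eqxx setU11.
    + by move=> ->.
    case/orP; last by move=> ->; rewrite !orbT.
    move=> /existsP [i xi]; apply/orP; right; apply/orP; left.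
    by apply/existsP; exists i; case: eqP => // _; rewrite setU1r.
split=> //=.
- by move=> i x xr; apply: ha; rewrite inE xr orbT.
- by move=> i; rewrite pe.
- by move=> i; rewrite pe.
- move=> _; split; first by case: (hf (negbT hst)).
  move=> x; rewrite !inE => /andP [xu xR].
  move: (hf (negbT hst)) => [_ /(_ x xR)].
  by rewrite inE (negbTE xu).
- apply: subset_trans hg; apply: subsetDl.
Qed.

Lemma Inv_fold t p0 u0 R0 E rest s : uniq rest -> Inv t p0 u0 R0 E s rest ->
  Inv t p0 u0 R0 E (foldl (stp t) s rest) [::].
Proof.
elim: rest s => [|u rest IH] s //= hu hI.
apply: IH; first by case/andP: hu.
exact: Inv_step.
Qed.

Lemma round_facts t :
  let s := rn t in let s' := rn t.+1 in
  [/\ forall i, v (mS s' i) - psum (mp s') (mS s' i) <= rh t.+1,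
      forall i, beta * psum (mp s') (mS s' i) <= v (mS s' i),
      forall x, mp s' x <= mp s x &
      (exists u j, [/\ mu s' = [set u], u \notin mS s' j &
           rh t.+1 < v (u |: mS s' j) - psum (mp s') (u |: mS s' j)])
      \/ (mu s' = mu s /\ stops v c B alpha beta eps ord tb t.+1)].
Proof.
move=> s s'.
set E := (\bigcup_(i < ell) mS s i) :|: mu s.
set L := [seq u <- ord | u \in mR s :\: E].
pose r0 : rstate R N ell := RState (mR s) (mp s) (mu s) (fun _ => set0) false.
have hL : uniq L by rewrite filter_uniq // (perm_uniq hord) enum_uniq.
have hI0 : Inv t.+1 (mp s) (mu s) (mR s) E r0 L.
  split=> //=.
  - by move=> i x _; rewrite inE.
  - by move=> i; rewrite /psum big_set0 v0 subrr; apply: ltW; apply: rho_gt0.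
  - by move=> i; rewrite /psum big_set0 v0 mulr0.
  - move=> _; split=> // x xR.
    case xE: (x \in E); first by rewrite !orbT.
    by rewrite mem_filter (perm_mem hord) mem_enum andbT in_setD xE xR.
pose r := foldl (stp t.+1) r0 L.
have [ha hb hc hd he hf hg] := Inv_fold hL hI0.
have es' : s' = MState (rR r) (rp r) (ru r) (rS r) by [].
rewrite es' /=.
split=> //.
case hst: (rstop r); first by left; apply: he.
right; have [hu hx] := hf (negbT hst); split=> //.
rewrite /stops /Sets /= -/s -/E -/L -/r0 -/r.
apply/eqP/setP => x; rewrite !inE.
case xR: (x \in rR r); rewrite ?andbF ?andbT //.
apply/negbTE; rewrite negbK.
move: (hx x xR); rewrite inE /=.
case/orP.
  move=> /existsP [i xi]; apply/orP; left; apply/bigcupP; exists i => //.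
  by rewrite inE xi orbT.
idtac; case/orP; last by rewrite hu => ->; rewrite orbT.
move=> /bigcupP [i _ xi]; apply/orP; left; apply/bigcupP; exists i => //.
by rewrite inE xi.
Qed.

Local Notation S t i := (mS (rn t) i).
Local Notation U M A := (util v c B alpha beta eps ord tb M A).

Lemma price_mono t k x : mp (rn (t + k)) x <= mp (rn t) x.
Proof.
elim: k => [|k IH]; first by rewrite addn0.
rewrite addnS; have [_ _ h _] := round_facts (t + k); exact: le_trans (h x) IH.
Qed.

Lemma beta_all t i : beta * psum (mp (rn t)) (S t i) <= v (S t i).
Proof.
case: t => [|t]; first by rewrite /= /psum big_set0 v0 mulr0.
by have [_ h _ _] := round_facts t; apply: h.
Qed.

Lemma gam_le (p V : R) : beta * p <= V -> (1 - beta^-1) * V <= V - p.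
Proof.
move=> h; have b0 : 0 < beta by move: bgt1; lra.
have : p <= beta^-1 * V by rewrite ler_pdivlMl.
lra.
Qed.

Lemma gam_rho t i : (1 - beta^-1) * v (S t.+1 i) <= rh t.+1.
Proof.
have [h1 h2 _ _] := round_facts t.
exact: le_trans (gam_le (h2 i)) (h1 i).
Qed.

Lemma gam_util t M i : (t <= M)%N -> (1 - beta^-1) * v (S t i) <= U M (S t i).
Proof.
move=> tM; rewrite /util; apply: gam_le.
apply: le_trans (beta_all t i).
apply: ler_wpM2l; first by move: bgt1; lra.
apply: psum_le => x; rewrite -(subnKC tM); apply: price_mono.
Qed.

Lemma split_util M u (S0 : {set N}) : u \notin S0 ->
  U M (u |: S0) <= U M [set u] + U M S0.
Proof.
move=> uS; rewrite /util psum_add // /psum big_set1.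
have := subm (sub0set S0) uS; rewrite /marg setU0 v0.
lra.
Qed.

Lemma geo k : (alpha - 1) * \sum_(1 <= t < k.+1) rh t = rh k.+1 - rh 1.
Proof.
elim: k => [|k IH]; first by rewrite big_geq // mulr0 subrr.
by rewrite big_nat_recr //= mulrDr IH (rhoS k.+1); ring.
Qed.

Lemma per_i M Sstar i :
  (0 < M)%N -> stops v c B alpha beta eps ord tb M ->
  (forall t, (0 < t < M)%N -> ~~ stops v c B alpha beta eps ord tb t) ->
  (forall A, candidate v c B alpha beta eps ord tb M A -> U M A <= U M Sstar) ->
  (alpha - 1) * ((1 - beta^-1) * \sum_(1 <= t < M.+1) v (Sets v c B alpha beta eps ord tb t i))
    <= 2 * alpha * U M Sstar.
Proof.
move=> M0 hstop hnst hbest.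
have candS : forall t j, t = M.-1 \/ t = M -> U M (S t j) <= U M Sstar.
  move=> t j [->|->]; apply: hbest; left; exists j; [by left | by right].
have candu : U M (mu (rn M)) <= U M Sstar by apply: hbest; right.
have g0 : 0 < 1 - beta^-1.
  have b0 : 0 < beta by move: bgt1; lra.
  by rewrite subr_gt0 invf_lt1.
have U0 : 0 <= U M Sstar.
  apply: le_trans (candS M i (or_intror erefl)).
  apply: le_trans (gam_util i (leqnn M)).
  by apply: mulr_ge0; [apply: ltW | apply: vge0].
have a1 : 0 < alpha - 1 by move: agt1; lra.
case: M M0 hstop hnst hbest candS candu U0 => [//|[|m]] _ hstop hnst hbest candS candu U0.
  rewrite big_nat1 /Sets.
  have := le_trans (gam_util i (leqnn 1)) (candS 1%N i (or_intror erefl)).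
  move: agt1; nra.
have hr : rh m.+1 <= 2 * U m.+2 Sstar.
  have [_ _ _ [[u [j [hu uj hlt]]]|[hmu _]]] := round_facts m.+1.
    have : rh m.+1 < rh m.+2.
      rewrite (rhoS m.+1); have := rho_gt0 m.+1; move: agt1; nra.
    have := split_util m.+2 uj.
    have := candS m.+2 j (or_intror erefl).
    rewrite hu in candu.
    rewrite /util in hlt *.
    move: hlt candu; rewrite /util; lra.
  have [_ _ _ [[u [j [hu uj hlt]]]|[_ hs]]] := round_facts m; last first.
    by move: (hnst m.+1); rewrite hs ltnSn => /(_ isT).
  have := split_util m.+2 uj.
  have := candS m.+1 j (or_introl erefl).
  rewrite hmu hu in candu.
  have : psum (mp (rn m.+2)) (u |: S m.+1 j) <= psum (mp (rn m.+1)) (u |: S m.+1 j).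
    apply: psum_le => x; rewrite -addn1; apply: price_mono.
  rewrite /util in hlt *.
  move: hlt candu; rewrite /util; lra.
rewrite big_nat_recr // big_nat_recr //= /Sets.
set Sg := \sum_(1 <= t < m.+1) _.
have hS : (alpha - 1) * ((1 - beta^-1) * Sg) <= 2 * U m.+2 Sstar.
  apply: le_trans hr.
  have : (1 - beta^-1) * Sg <= \sum_(1 <= t < m.+1) rh t.
    rewrite /Sg mulr_sumr big_nat_cond [X in _ <= X]big_nat_cond.
    apply: ler_sum => t /andP [/andP [t1 _] _].
    by case: t t1 => [//|t] _; apply: gam_rho.
  move=> h; apply: le_trans (ler_wpM2l (ltW a1) h) _.
  rewrite geo; have := rho_gt0 1; lra.
have h1 := le_trans (gam_util i (leqnSn m.+1)) (candS m.+1 i (or_introl erefl)).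
have h2 := le_trans (gam_util i (leqnn m.+2)) (candS m.+2 i (or_intror erefl)).
set UU := U m.+2 Sstar in hS h1 h2 U0 *; clearbody UU.
rewrite !mulrDr.
have k1 := ler_wpM2l (ltW a1) h1; have k2 := ler_wpM2l (ltW a1) h2.
move: hS k1 k2; set X := (1 - beta^-1) * Sg.
set Y1 := (1 - beta^-1) * _; set Y2 := (1 - beta^-1) * _.
lra.
Qed.

End Pf.

Unset Implicit Arguments.

Theorem lemma4p7 (R : realFieldType) (N : finType) (ell : nat)
    (v : {set N} -> R) (c : N -> R) (B alpha beta eps : R) (ord : seq N)
    (tb : nat -> N -> ('I_ell -> {set N}) -> 'I_ell)
    (M : nat) (Sstar : {set N}) :
  v set0 = 0 -> (forall A, 0 <= v A) -> submodular v ->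
  (forall u, 0 <= c u) ->
  0 < B -> 1 < alpha -> 1 < beta -> 0 < eps ->
  ((ell == 1) || (ell == 2))%N ->
  perm_eq ord (enum N) ->
  (forall t u (S : 'I_ell -> {set N}) (i : 'I_ell),
      marg v u (S i) <= marg v u (S (tb t u S))) ->
  (0 < M)%N ->
  stops v c B alpha beta eps ord tb M ->
  (forall t, (0 < t < M)%N -> ~~ stops v c B alpha beta eps ord tb t) ->
  candidate v c B alpha beta eps ord tb M Sstar ->
  (forall A, candidate v c B alpha beta eps ord tb M A ->
     util v c B alpha beta eps ord tb M A <= util v c B alpha beta eps ord tb M Sstar) ->
  \sum_(i < ell) \sum_(1 <= t < M.+1) v (Sets v c B alpha beta eps ord tb t i)
    <= (2 * ell%:R * alpha * util v c B alpha beta eps ord tb M Sstar)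
       / ((alpha - 1) * (1 - beta^-1)).
Proof.
move=> v0 vge0 subm cge0 Bgt0 agt1 bgt1 egt0 hell hord htb M0 hstop hnst hcand hbest.
have a1 : 0 < alpha - 1 by move: agt1; lra.
have g0 : 0 < 1 - beta^-1.
  have b0 : 0 < beta by move: bgt1; lra.
  by rewrite subr_gt0 invf_lt1.
rewrite ler_pdivlMr; last by apply: mulr_gt0.
rewrite mulr_suml.
set UU := util v c B alpha beta eps ord tb M Sstar.
apply: le_trans (_ : \sum_(i < ell) (2 * alpha * UU) <= _).
  apply: ler_sum => i _.
  have h := per_i v0 vge0 subm cge0 Bgt0 agt1 bgt1 egt0 hord i M0 hstop hnst hbest.
  apply: le_trans h; rewrite le_eqVlt; apply/orP; left; apply/eqP; ring.
rewrite sumr_const card_ord -mulr_natl le_eqVlt; apply/orP; left; apply/eqP; ring.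
Qed.
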